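(* If $\lambda>\operatorname{cf}(\lambda)=\omega$, then $\mathfrak{r}_\lambda\le\mathfrak{i}_\lambda$.
   Context: For $\mathcal{A}\subseteq[\lambda]^\lambda$, $\operatorname{comb}(\mathcal{A})$ is the set of all sets $\bigcap\Gamma-\bigcup\Delta$ with $\Gamma,\Delta\in[\mathcal{A}]^{<\omega}$, $\Gamma\cap\Delta=\varnothing$. $\mathcal{A}$ is independent iff $\operatorname{comb}(\mathcal{A})\subseteq[\lambda]^\lambda$; $\mathfrak{i}_\lambda$ is the minimal size of a maximal independent family in $[\lambda]^\lambda$. A set $S$ splits $B\in[\lambda]^\lambda$ if $|B\cap S|=|B-S|=\lambda$. A family $\mathcal{A}\subseteq[\lambda]^\lambda$ is unsplittable if no single $S\in[\lambda]^\lambda$ splits every member of $\mathcal{A}$; the reaping number $\mathfrak{r}_\lambda$ is the minimal size of an unsplittable family in $[\lambda]^\lambda$. *)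

(* Defs.v *)
(* cardinal characteristics r_lambda, i_lambda on a cardinal lambda.
   lambda is represented as an initial ordinal: a type L with a strict
   well-order R such that every proper initial segment has smaller cardinality. *)
From Stdlib Require Import List Wellfounded Relations.

Set Implicit Arguments.

Definition injective {A B : Type} (f : A -> B) : Prop :=
  forall x y, f x = f y -> x = y.

Definition strict_well_order {L : Type} (R : L -> L -> Prop) : Prop :=
  well_founded R /\
  (forall x y z, R x y -> R y z -> R x z) /\
  (forall x y, x = y \/ R x y \/ R y x).

Definition initial_ordinal {L : Type} (R : L -> L -> Prop) : Prop :=
  forall y : L, ~ exists f : L -> {x : L | R x y}, injective f.

Definition uncountable (L : Type) : Prop :=
  ~ exists f : L -> nat, injective f.

(* cf(lambda) = omega (given lambda uncountable, hence infinite):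
   there is an omega-sequence cofinal in lambda *)
Definition countable_cofinality {L : Type} (R : L -> L -> Prop) : Prop :=
  exists c : nat -> L, forall x : L, exists n : nat, R x (c n).

(* S in [lambda]^lambda, i.e. |S| = lambda for S a subset of lambda *)
Definition big {L : Type} (S : L -> Prop) : Prop :=
  exists f : L -> L, injective f /\ forall x, S (f x).

(* the Boolean combination  /\Gamma - \/Delta  (empty intersection = lambda) *)
Definition comb_set {L : Type} (Gam Del : list (L -> Prop)) : L -> Prop :=
  fun x => (forall X, In X Gam -> X x) /\ (forall Y, In Y Del -> ~ Y x).

Definition independent {L : Type} (A : (L -> Prop) -> Prop) : Prop :=
  (forall X, A X -> big X) /\
  forall Gam Del : list (L -> Prop),
    (forall X, In X Gam -> A X) ->
    (forall X, In X Del -> A X) ->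
    (forall X, In X Gam -> ~ In X Del) ->
    big (comb_set Gam Del).

Definition maximal_independent {L : Type} (A : (L -> Prop) -> Prop) : Prop :=
  independent A /\
  forall B : (L -> Prop) -> Prop,
    independent B -> (forall X, A X -> B X) -> forall X, B X -> A X.

Definition splits {L : Type} (S B : L -> Prop) : Prop :=
  big (fun x => B x /\ S x) /\ big (fun x => B x /\ ~ S x).

Definition unsplittable {L : Type} (A : (L -> Prop) -> Prop) : Prop :=
  (forall X, A X -> big X) /\
  ~ exists S : L -> Prop, big S /\ forall X, A X -> splits S X.

Definition card_le {T : Type} (B A : T -> Prop) : Prop :=
  exists f : {X : T | B X} -> {X : T | A X}, injective f.

(* Main.v *)
Require Import Defs.
From Stdlib Require Import Lia List Classical ClassicalEpsilon ProofIrrelevance FunctionalExtensionality PropExtensionality Cantor.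
From mathcomp Require classical_sets.
Lemma zorn_sets (T : Type) (P : (T -> Prop) -> Prop) :
  (forall F : (T->Prop) -> Prop, (forall X, F X -> P X) ->
     (forall X Y, F X -> F Y -> (forall t, X t -> Y t) \/ (forall t, Y t -> X t)) ->
     P (fun t => exists X, F X /\ X t)) ->
  exists M, P M /\ forall N, P N -> (forall t, M t -> N t) -> forall t, N t -> M t.
Proof.
intros H.
destruct (@classical_sets.Zorn_bigcup T P) as [M [PM HM]].
- intros F FP Ft.
  replace (classical_sets.bigcup F (fun X : classical_sets.set T => X)) with (fun t => exists X, F X /\ X t).
  + apply H. exact FP. intros X Y FX FY. destruct (Ft X Y FX FY); [left|right]; exact H0.
  + apply functional_extensionality; intro t. apply propositional_extensionality.
    unfold classical_sets.bigcup, classical_sets.mkset. split.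
    * intros [X [a b]]; exists X; auto.
    * intros [X a b]; exists X; auto.
- exists M. split; [exact PM|]. intros N PN MN t Nt.
  apply NNPP; intro nM. apply (HM N); [|exact PN].
  split. exact MN. intro NM. apply nM. apply NM. exact Nt.
Qed.

Definition chooseT {A : Type} (a0 : A) (Q : A -> Prop) : A :=
  match excluded_middle_informative (exists a, Q a) with
  | left h => proj1_sig (constructive_indefinite_description _ h)
  | right _ => a0 end.

Lemma chooseT_spec {A : Type} (a0 : A) (Q : A -> Prop) : (exists a, Q a) -> Q (chooseT a0 Q).
Proof.
intro h. unfold chooseT. destruct (excluded_middle_informative (exists a, Q a)) as [h'|n].
- exact (proj2_sig (constructive_indefinite_description _ h')).
- contradiction.
Qed.

Lemma compar (T U : Type) (t0 : T) (u0 : U) (X : T -> Prop) (Y : U -> Prop) :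
 (exists f : T -> U, (forall x, X x -> Y (f x)) /\ (forall x x', X x -> X x' -> f x = f x' -> x = x')) \/
 (exists g : U -> T, (forall y, Y y -> X (g y)) /\ (forall y y', Y y -> Y y' -> g y = g y' -> y = y')).
Proof.
set (P := fun r : T * U -> Prop =>
  (forall x y, r (x,y) -> X x /\ Y y) /\ (forall x y y', r (x,y) -> r (x,y') -> y = y') /\
  (forall x x' y, r (x,y) -> r (x',y) -> x = x')).
destruct (zorn_sets (T*U) P) as [M [[M1 [M2 M3]] HM]].
- intros F FP Ft. split; [|split].
  + intros x y [Z [FZ Zt]]. exact (proj1 (FP Z FZ) x y Zt).
  + intros x y y' [Z [FZ Zt]] [Z' [FZ' Zt']].
    destruct (Ft Z Z' FZ FZ') as [s|s].
    * exact (proj1 (proj2 (FP Z' FZ')) x y y' (s _ Zt) Zt').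
    * exact (proj1 (proj2 (FP Z FZ)) x y y' Zt (s _ Zt')).
  + intros x x' y [Z [FZ Zt]] [Z' [FZ' Zt']].
    destruct (Ft Z Z' FZ FZ') as [s|s].
    * exact (proj2 (proj2 (FP Z' FZ')) x x' y (s _ Zt) Zt').
    * exact (proj2 (proj2 (FP Z FZ)) x x' y Zt (s _ Zt')).
- destruct (classic (forall x, X x -> exists y, M (x,y))) as [Hf|Hf].
  + left. exists (fun x => chooseT u0 (fun y => M (x,y))). split.
    * intros x Xx. exact (proj2 (M1 _ _ (chooseT_spec u0 _ (Hf x Xx)))).
    * intros x x' Xx Xx' E. apply (M3 x x' (chooseT u0 (fun y => M (x,y)))).
      exact (chooseT_spec u0 _ (Hf x Xx)). rewrite E. exact (chooseT_spec u0 _ (Hf x' Xx')).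
  + apply not_all_ex_not in Hf. destruct Hf as [x0 Hx0].
    apply imply_to_and in Hx0. destruct Hx0 as [Xx0 nx0].
    destruct (classic (forall y, Y y -> exists x, M (x,y))) as [Hg|Hg].
    * right. exists (fun y => chooseT t0 (fun x => M (x,y))). split.
      -- intros y Yy. exact (proj1 (M1 _ _ (chooseT_spec t0 _ (Hg y Yy)))).
      -- intros y y' Yy Yy' E. apply (M2 (chooseT t0 (fun x => M (x,y))) y y').
         exact (chooseT_spec t0 _ (Hg y Yy)). rewrite E. exact (chooseT_spec t0 _ (Hg y' Yy')).
    * exfalso. apply not_all_ex_not in Hg. destruct Hg as [y0 Hy0].
      apply imply_to_and in Hy0. destruct Hy0 as [Yy0 ny0].
      assert (HP : P (fun p => M p \/ p = (x0,y0))).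
      { split; [|split].
        - intros x y [h|h]. apply M1; exact h. injection h; intros; subst; auto.
        - intros x y y' [h|h] [h'|h'].
          + eauto.
          + injection h'; intros; subst. exfalso; apply nx0; eauto.
          + injection h; intros; subst. exfalso; apply nx0; eauto.
          + injection h; injection h'; intros; subst; auto.
        - intros x x' y [h|h] [h'|h'].
          + eauto.
          + injection h'; intros; subst. exfalso; apply ny0; eauto.
          + injection h; intros; subst. exfalso; apply ny0; eauto.
          + injection h; injection h'; intros; subst; auto. }
      apply nx0. exists y0. apply (HM _ HP). intros t Mt; left; exact Mt. right; reflexivity.
Qed.

Section Sq.
Variable T : Type.
Variable d : nat -> T.
Hypothesis dinj : forall m n, d m = d n -> m = n.

Definition Dg (g : (T*T)*T -> Prop) x := exists z, g ((x,x),z).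
Definition valid (g : (T*T)*T -> Prop) :=
 (forall p z z', g (p,z) -> g (p,z') -> z = z') /\
 (forall p p' z, g (p,z) -> g (p',z) -> p = p') /\
 (forall x y z, g ((x,y),z) -> Dg g x /\ Dg g y /\ Dg g z) /\
 (forall x y, Dg g x -> Dg g y -> exists z, g ((x,y),z)) /\
 (forall n, Dg g (d n)).
Definition PP g := (forall t, ~ g t) \/ valid g.

Lemma Dg_mono (g g' : (T*T)*T -> Prop) x : (forall t, g t -> g' t) -> Dg g x -> Dg g' x.
Proof. intros s [z h]. exists z. apply s, h. Qed.

Lemma chain_PP (F : ((T*T)*T -> Prop) -> Prop) : (forall X, F X -> PP X) ->
  (forall X Y, F X -> F Y -> (forall t, X t -> Y t) \/ (forall t, Y t -> X t)) ->
  PP (fun t => exists X, F X /\ X t).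
Proof.
intros FP Ft. set (U := fun t => exists X, F X /\ X t).
destruct (classic (exists t, U t)) as [[t0 Ut0]|nU].
2:{ left. intros t Ut. apply nU. exists t; exact Ut. }
right.
assert (key : forall t, U t -> exists Z, F Z /\ Z t /\ valid Z).
{ intros t [Z [FZ Zt]]. exists Z. split; [exact FZ|split; [exact Zt|]].
  destruct (FP Z FZ) as [e|v]; [exfalso; exact (e t Zt)|exact v]. }
assert (sub : forall Z, F Z -> forall t, Z t -> U t). { intros Z FZ t Zt. exists Z; auto. }
assert (two : forall t t', U t -> U t' -> exists W, valid W /\ W t /\ W t' /\ F W).
{ intros t t' Ut Ut'. destruct (key t Ut) as [Z [FZ [Zt vZ]]]. destruct (key t' Ut') as [Z' [FZ' [Zt' vZ']]].
  destruct (Ft Z Z' FZ FZ') as [s|s].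
  - exists Z'. auto.
  - exists Z. auto. }
split; [|split; [|split; [|split]]].
- intros p z z' h h'. destruct (two _ _ h h') as [W [vW [a [b _]]]]. exact (proj1 vW p z z' a b).
- intros p p' z h h'. destruct (two _ _ h h') as [W [vW [a [b _]]]]. exact (proj1 (proj2 vW) p p' z a b).
- intros x y z h. destruct (key _ h) as [Z [FZ [Zt vZ]]].
  destruct (proj1 (proj2 (proj2 vZ)) x y z Zt) as [a [b c0]].
  split; [|split]; eapply Dg_mono; try eapply sub; eauto.
- intros x y [z1 h1] [z2 h2]. destruct (two _ _ h1 h2) as [W [vW [a [b FW]]]].
  destruct (proj1 (proj2 (proj2 (proj2 vW))) x y) as [z hz]. exists z1; exact a. exists z2; exact b.
  exists z. apply (sub W FW _ hz).
- intros n. destruct (key _ Ut0) as [Z [FZ [Zt vZ]]].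
  eapply Dg_mono. apply (sub Z FZ). apply (proj2 (proj2 (proj2 (proj2 vZ)))).
Qed.

Definition g0 (t : (T*T)*T) := exists a b, t = ((d a, d b), d (to_nat (a,b))).

Lemma to_nat_inj p q : to_nat p = to_nat q -> p = q.
Proof. intro h. rewrite <- (cancel_of_to p), <- (cancel_of_to q), h. reflexivity. Qed.

Lemma g0_valid : valid g0.
Proof.
split; [|split; [|split; [|split]]].
- intros p z z' [a [b h]] [a' [b' h']]. injection h as hp hz. injection h' as hp' hz'. subst p z z'.
  injection hp' as ha hb. apply dinj in ha, hb. subst. reflexivity.
- intros p p' z [a [b h]] [a' [b' h']]. injection h as hp hz. injection h' as hp' hz'. subst p p' z.
  apply dinj in hz'. apply (to_nat_inj (a,b) (a',b')) in hz'. injection hz' as ha hb. subst. reflexivity.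
- intros x y z [a [b h]]. injection h; intros; subst.
  split; [|split].
  + exists (d (to_nat (a,a))). exists a, a. reflexivity.
  + exists (d (to_nat (b,b))). exists b, b. reflexivity.
  + exists (d (to_nat (to_nat (a,b), to_nat (a,b)))). exists (to_nat (a,b)), (to_nat (a,b)). reflexivity.
- intros x y [z1 [a [a1 h1]]] [z2 [b [b1 h2]]]. injection h1 as hx hx' _. injection h2 as hy hy' _.
  subst x y. exists (d (to_nat (a,b))). exists a, b. reflexivity.
- intro n. exists (d (to_nat (n,n))). exists n, n. reflexivity.
Qed.

Lemma sq_main : exists p : T -> T -> T, forall a b a' b', p a b = p a' b' -> a = a' /\ b = b'.
Proof.
destruct (zorn_sets _ PP chain_PP) as [M [PM HM]].
assert (vM : valid M).
{ destruct PM as [e|v]; [|exact v]. exfalso.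
  assert (s : forall t, g0 t -> M t). { apply (HM g0). right; exact g0_valid. intros t Mt; exfalso; exact (e t Mt). }
  apply (e _ (s ((d 0, d 0), d (to_nat (0,0))) (ex_intro _ 0 (ex_intro _ 0 eq_refl)))). }
destruct vM as [M1 [M2 [M3 [M4 M5]]]].
set (D := Dg M).
set (pm := fun x y => chooseT (d 0) (fun z => M ((x,y),z))).
assert (pmM : forall x y, D x -> D y -> M ((x,y), pm x y)).
{ intros x y Dx Dy. apply chooseT_spec. apply M4; assumption. }
assert (pmD : forall x y, D x -> D y -> D (pm x y)).
{ intros x y Dx Dy. exact (proj2 (proj2 (M3 _ _ _ (pmM x y Dx Dy)))). }
assert (pminj : forall x y x' y', D x -> D y -> D x' -> D y' -> pm x y = pm x' y' -> x = x' /\ y = y').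
{ intros x y x' y' Dx Dy Dx' Dy' E. pose proof (pmM x y Dx Dy) as h. pose proof (pmM x' y' Dx' Dy') as h'.
  rewrite E in h. pose proof (M2 _ _ _ h h') as E'. injection E'; auto. }
assert (dD : forall n, D (d n)) by exact M5.
assert (d0n1 : d 0 <> d 1). { intro h. apply dinj in h. discriminate. }
destruct (compar T T (d 0) (d 0) (fun x => ~ D x) D) as [[j [j1 j2]]|[e [e1 e2]]].
-
  set (q := fun x => match excluded_middle_informative (D x) with left _ => pm x (d 0) | right _ => pm (j x) (d 1) end).
  assert (qD : forall x, D x -> q x = pm x (d 0)).
  { intros x Dx. unfold q. destruct (excluded_middle_informative (D x)); [reflexivity|contradiction]. }
  assert (qN : forall x, ~ D x -> q x = pm (j x) (d 1)).
  { intros x Dx. unfold q. destruct (excluded_middle_informative (D x)); [contradiction|reflexivity]. }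
  clearbody q.
  assert (qin : forall x, D (q x)).
  { intro x. destruct (classic (D x)) as [Dx|Dx].
    - rewrite qD by exact Dx. apply pmD; auto.
    - rewrite qN by exact Dx. apply pmD; auto. }
  assert (qinj : forall x x', q x = q x' -> x = x').
  { intros x x' E. destruct (classic (D x)) as [Dx|Dx]; destruct (classic (D x')) as [Dx'|Dx'].
    - rewrite (qD x Dx), (qD x' Dx') in E. apply pminj in E; auto. destruct E; auto.
    - rewrite (qD x Dx), (qN x' Dx') in E. apply pminj in E; auto. destruct E; contradiction.
    - rewrite (qN x Dx), (qD x' Dx') in E. apply pminj in E; auto. destruct E as [_ E]. exfalso; auto.
    - rewrite (qN x Dx), (qN x' Dx') in E. apply pminj in E; auto. destruct E as [E _]. auto. }
  exists (fun x y => pm (q x) (q y)). intros a b a' b' E.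
  apply pminj in E; auto. destruct E as [E1 E2]. split; apply qinj; auto.
- (* contradiction: extend *)
  exfalso.
  set (E := fun y => exists x, D x /\ y = e x).
  set (einv := fun y => chooseT y (fun x => D x /\ y = e x)).
  assert (einvS : forall y, E y -> D (einv y) /\ y = e (einv y)).
  { intros y Ey. apply chooseT_spec. exact Ey. }
  assert (DnE : forall x, D x -> ~ E x).
  { intros x Dx [x' [Dx' h]]. subst. exact (e1 x' Dx' Dx). }
  set (DE := fun x => D x \/ E x).
  set (cc := fun x => match excluded_middle_informative (D x) with left _ => x | right _ => einv x end).
  set (bb := fun x => match excluded_middle_informative (D x) with left _ => 0 | right _ => 1 end).
  assert (ccD : forall x, DE x -> D (cc x)).
  { intros x [Dx|Ex]; unfold cc; destruct (excluded_middle_informative (D x)); auto.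
    contradiction. apply einvS; exact Ex. }
  assert (ccinj : forall x x', DE x -> DE x' -> cc x = cc x' -> bb x = bb x' -> x = x').
  { intros x x' Hx Hx'. unfold cc, bb.
    destruct (excluded_middle_informative (D x)); destruct (excluded_middle_informative (D x')); try discriminate; auto.
    intros h _. destruct Hx as [Dx|Ex]; [contradiction|]. destruct Hx' as [Dx'|Ex']; [contradiction|].
    rewrite (proj2 (einvS x Ex)), (proj2 (einvS x' Ex')), h. reflexivity. }
  set (code := fun x y => e (pm (pm (cc x) (cc y)) (d (to_nat (bb x, bb y))))).
  assert (codeD : forall x y, DE x -> DE y -> D (pm (pm (cc x) (cc y)) (d (to_nat (bb x, bb y))))).
  { intros x y Hx Hy. apply pmD; [apply pmD|]; auto. }
  assert (eE : forall x, D x -> E (e x)). { intros x Dx. exists x; auto. }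
  assert (codeE : forall x y, DE x -> DE y -> E (code x y)). { intros. apply eE, codeD; auto. }
  assert (codeinj : forall x y x' y', DE x -> DE y -> DE x' -> DE y' -> code x y = code x' y' -> x = x' /\ y = y').
  { intros x y x' y' Hx Hy Hx' Hy' Ec. apply e2 in Ec; try apply codeD; auto.
    apply pminj in Ec; try apply pmD; auto. destruct Ec as [Ec Eb].
    apply pminj in Ec; auto. destruct Ec as [Ec1 Ec2]. apply dinj in Eb.
    apply (to_nat_inj (bb x, bb y) (bb x', bb y')) in Eb. injection Eb as Eb1 Eb2.
    split; apply ccinj; auto. }
  clearbody code cc bb einv.
  set (h := fun t : (T*T)*T => exists x y, t = ((x,y), code x y) /\ DE x /\ DE y /\ (E x \/ E y)).
  set (M' := fun t => M t \/ h t).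
  assert (DgM' : forall x, Dg M' x <-> DE x).
  { intro x. split.
    - intros [z [Mt|[x' [y' [ht [h1 [h2 h3]]]]]]].
      + left. exact (proj1 (M3 _ _ _ Mt)).
      + injection ht as hx hy hz. subst. exact h1.
    - intros [Dx|Ex].
      + eapply Dg_mono; [|exact Dx]. intros t Mt; left; exact Mt.
      + exists (code x x). right. exists x, x. split; [reflexivity|]. split; [right; exact Ex|]. split; [right; exact Ex|]. left; exact Ex. }
  assert (EnD : forall x, E x -> ~ D x). { intros x Ex Dx. exact (DnE x Dx Ex). }
  assert (vM' : valid M').
  { split; [|split; [|split; [|split]]].
    - intros p z z' [Mt|[x [y [ht [h1 [h2 h3]]]]]] [Mt'|[x' [y' [ht' [h1' [h2' h3']]]]]].
      + exact (M1 _ _ _ Mt Mt').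
      + injection ht' as hp hz. subst. destruct (M3 _ _ _ Mt) as [a [b _]]. destruct h3' as [h3'|h3']; exfalso; eapply EnD; eauto.
      + injection ht as hp hz. subst. destruct (M3 _ _ _ Mt') as [a [b _]]. destruct h3 as [h3|h3]; exfalso; eapply EnD; eauto.
      + injection ht as hp hz. injection ht' as hp' hz'. subst. injection hp' as e1' e2'. subst. reflexivity.
    - intros p p' z [Mt|[x [y [ht [h1 [h2 h3]]]]]] [Mt'|[x' [y' [ht' [h1' [h2' h3']]]]]].
      + exact (M2 _ _ _ Mt Mt').
      + injection ht' as hp hz. subst. destruct p as [a b]. destruct (M3 _ _ _ Mt) as [_ [_ c0]]. exfalso. apply (EnD (code x' y')). apply codeE; auto. exact c0.
      + injection ht as hp hz. subst. destruct p' as [a b]. destruct (M3 _ _ _ Mt') as [_ [_ c0]]. exfalso. apply (EnD (code x y)). apply codeE; auto. exact c0.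
      + injection ht as hp hz. injection ht' as hp' hz'. subst. apply codeinj in hz'; auto. destruct hz'; subst; reflexivity.
    - intros x y z [Mt|[x' [y' [ht [h1 [h2 h3]]]]]].
      + destruct (M3 _ _ _ Mt) as [a [b c0]]. split; [|split]; apply DgM'; left; auto.
      + injection ht as hx hy hz. subst. split; [|split]; apply DgM'; auto. right; apply codeE; auto.
    - intros x y Hx Hy. apply DgM' in Hx, Hy.
      destruct (classic (D x /\ D y)) as [[Dx Dy]|nD].
      + destruct (M4 x y Dx Dy) as [z hz]. exists z. left; exact hz.
      + exists (code x y). right. exists x, y. split; [reflexivity|]. split; [auto|]. split; [auto|].
        destruct Hx as [Dx|Ex]; [|left; exact Ex]. destruct Hy as [Dy|Ey]; [|right; exact Ey]. exfalso; auto.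
    - intro n. apply DgM'. left; auto. }
  assert (sub : forall t, M' t -> M t). { apply (HM M'). right; exact vM'. intros t Mt; left; exact Mt. }
  assert (Ex1 : E (e (d 0))) by (apply eE; auto).
  assert (hx1 : M' ((e (d 0), e (d 0)), code (e (d 0)) (e (d 0)))).
  { right. exists (e (d 0)), (e (d 0)). split; [reflexivity|]. split; [right; auto|]. split; [right; auto|]. left; auto. }
  apply sub in hx1. destruct (M3 _ _ _ hx1) as [a _]. exact (EnD _ Ex1 a).
Qed.
End Sq.

Lemma fin_or_inf {T : Type} (P0 : T -> Prop) :
  (exists l : list T, forall x, P0 x -> In x l) \/
  exists d : nat -> T, (forall m n, d m = d n -> m = n) /\ forall n, P0 (d n).
Proof.
destruct (classic (exists l : list T, forall x, P0 x -> In x l)) as [h|h]; [left; exact h|right].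
assert (H : forall l : list T, exists x, P0 x /\ ~ In x l).
{ intro l. apply NNPP; intro n. apply h. exists l. intros x Px. apply NNPP; intro nx. apply n. exists x; auto. }
destruct (H nil) as [t0 _].
set (pick := fun l : list T => chooseT t0 (fun x => P0 x /\ ~ In x l)).
assert (pickS : forall l, P0 (pick l) /\ ~ In (pick l) l). { intro l. apply chooseT_spec, H. }
set (F := fix F (n : nat) : list T := match n with O => nil | S k => pick (F k) :: F k end).
assert (Fin : forall m n, m < n -> In (pick (F m)) (F n)).
{ intros m n; induction n as [|n IH]; intro lt.
  - inversion lt.
  - simpl. destruct (PeanoNat.Nat.eq_dec m n) as [->|ne]; [left; reflexivity|right; apply IH].
    lia. }
exists (fun n => pick (F n)). split.
- intros m n E. destruct (PeanoNat.Nat.lt_trichotomy m n) as [lt|[eq|lt]]; auto.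
  + exfalso. apply (proj2 (pickS (F n))). rewrite <- E. apply Fin; auto.
  + exfalso. apply (proj2 (pickS (F m))). rewrite E. apply Fin; auto.
- intro n. apply pickS.
Qed.

Section Enc.
Variable S : Type.
Variable dS : nat -> S.
Hypothesis dSinj : forall m n, dS m = dS n -> m = n.
Variable pS : S -> S -> S.
Hypothesis pSinj : forall a b a' b', pS a b = pS a' b' -> a = a' /\ b = b'.
Definition body (l : list S) := fold_right (fun x b => pS x b) (dS 0) l.
Definition enc (l : list S) := pS (dS (length l)) (body l).
Lemma enc_inj l1 l2 : enc l1 = enc l2 -> l1 = l2.
Proof.
unfold enc. intro E. apply pSinj in E. destruct E as [E1 E2]. apply dSinj in E1.
revert l2 E1 E2. induction l1 as [|x r IH]; intros [|y r'] E1 E2; try discriminate; auto.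
simpl in *. apply pSinj in E2. destruct E2 as [-> E2]. f_equal. apply IH; auto.
Qed.
End Enc.

Lemma sig_eq {T : Type} (P : T -> Prop) (a b : {x | P x}) : proj1_sig a = proj1_sig b -> a = b.
Proof. destruct a as [a pa], b as [b pb]. simpl. intro E. subst. f_equal. apply proof_irrelevance. Qed.

Lemma big_mono {L : Type} (S T : L -> Prop) : big S -> (forall x, S x -> T x) -> big T.
Proof. intros [f [fi fS]] s. exists f. split; auto. Qed.

Lemma big_ne {L : Type} (l0 : L) (S : L -> Prop) : big S -> exists x, S x.
Proof. intros [f [_ fS]]. exists (f l0). auto. Qed.

Definition good {L : Type} (A : (L -> Prop) -> Prop) (G D : list (L -> Prop)) :=
  (forall X, In X G -> A X) /\ (forall X, In X D -> A X) /\ (forall X, In X G -> ~ In X D).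

Definition eqd {T : Type} : forall x y : T, {x = y} + {x <> y} := fun x y => excluded_middle_informative (x = y).

Lemma noSplitAll {L : Type} (l0 : L) (A : (L -> Prop) -> Prop) (HA : maximal_independent A)
  (S : L -> Prop) (bS : big S) (Hs : forall G D, good A G D -> splits S (comb_set G D)) : False.
Proof.
destruct HA as [[Ab Ai] Amax].
set (A' := fun X => A X \/ X = S).
assert (iA' : independent A').
{ split.
  - intros X [h|h]; [apply Ab; exact h|subst; exact bS].
  - intros G D HG HD Hdis.
    set (G' := remove eqd S G). set (D' := remove eqd S D).
    assert (gd : good A G' D').
    { split; [|split].
      - intros X h. apply in_remove in h. destruct h as [h n]. destruct (HG X h); [auto|contradiction].
      - intros X h. apply in_remove in h. destruct h as [h n]. destruct (HD X h); [auto|contradiction].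
      - intros X h h'. apply in_remove in h, h'. apply (Hdis X); tauto. }
    destruct (Hs G' D' gd) as [s1 s2].
    destruct (classic (In S G)) as [SG|SG].
    + apply (big_mono _ _ s1). intros x [[c1 c2] Sx]. split.
      * intros X XG. destruct (eqd X S) as [->|n]; [exact Sx|]. apply c1, in_in_remove; auto.
      * intros Y YD. destruct (eqd Y S) as [->|n]. exfalso; exact (Hdis S SG YD). apply c2, in_in_remove; auto.
    + apply (big_mono _ _ s2). intros x [[c1 c2] Sx]. split.
      * intros X XG. destruct (eqd X S) as [->|n]. contradiction. apply c1, in_in_remove; auto.
      * intros Y YD. destruct (eqd Y S) as [->|n]. exact Sx. apply c2, in_in_remove; auto. }
assert (AS : A S). { apply (Amax A' iA'). intros X h; left; exact h. right; reflexivity. }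
assert (gS : good A (S :: nil) nil).
{ split; [|split]. intros X [<-|[]]; exact AS. intros X []. intros X _ []. }
destruct (Hs _ _ gS) as [_ s2]. destruct (big_ne l0 _ s2) as [x [[c1 _] nS]].
apply nS, c1. left; reflexivity.
Qed.

Definition decb (P : Prop) : bool := if excluded_middle_informative P then true else false.
Lemma decb_true P : decb P = true <-> P.
Proof. unfold decb. destruct (excluded_middle_informative P); split; intros; auto; discriminate. Qed.
Lemma decb_ext P Q : (P <-> Q) -> decb P = decb Q.
Proof. intro h. rewrite (propositional_extensionality P Q h). reflexivity. Qed.

Lemma finCase {L : Type} (l0 : L) (A : (L -> Prop) -> Prop) (HA : maximal_independent A)
  (lst : list (L -> Prop)) (cov : forall X, A X -> In X lst) (e0 e1 : L -> L)
  (e0i : injective e0) (e1i : injective e1) (dis : forall x y, e0 x <> e1 y) : False.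
Proof.
assert (half : forall C, big C -> exists H : L -> Prop, (forall x, H x -> C x) /\ big H /\ big (fun x => C x /\ ~ H x)).
{ intros C [f [fi fC]]. exists (fun y => exists x, y = f (e0 x)). split; [|split].
  - intros y [x ->]. apply fC.
  - exists (fun x => f (e0 x)). split. intros x y E. apply e0i, fi, E. intro x; exists x; reflexivity.
  - exists (fun x => f (e1 x)). split. intros x y E. apply e1i, fi, E.
    intro x. split. apply fC. intros [x' E]. apply fi in E. exact (dis x' x (eq_sym E)). }
set (Hf := fun C => chooseT (fun _ : L => False) (fun H => (forall x, H x -> C x) /\ big H /\ big (fun x => C x /\ ~ H x))).
assert (HfS : forall C, big C -> (forall x, Hf C x -> C x) /\ big (Hf C) /\ big (fun x => C x /\ ~ Hf C x)).
{ intros C bC. apply (chooseT_spec (fun _ : L => False) (fun H => (forall x, H x -> C x) /\ big H /\ big (fun x => C x /\ ~ H x))). apply half, bC. }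
clearbody Hf.
set (Gx := fun x : L => filter (fun X => decb (A X /\ X x)) lst).
set (Dx := fun x : L => filter (fun X => decb (A X /\ ~ X x)) lst).
assert (inG : forall x X, In X (Gx x) <-> In X lst /\ A X /\ X x).
{ intros x X. unfold Gx. rewrite filter_In, decb_true. tauto. }
assert (inD : forall x X, In X (Dx x) <-> In X lst /\ A X /\ ~ X x).
{ intros x X. unfold Dx. rewrite filter_In, decb_true. tauto. }
set (atom := fun x => comb_set (Gx x) (Dx x)).
assert (atom_eq : forall x y, atom x y -> Gx y = Gx x /\ Dx y = Dx x).
{ intros x y [a1 a2].
  assert (iff : forall X, In X lst -> A X -> (X y <-> X x)).
  { intros X Xl AX. split.
    - intro Xy. apply NNPP; intro nX. apply (a2 X). apply inD; auto. exact Xy.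
    - intro Xx. apply a1. apply inG; auto. }
  split; [unfold Gx|unfold Dx]; apply filter_ext_in; intros X Xl; apply decb_ext;
    split; intros [AX h]; split; auto; try (apply (iff X Xl AX); auto); try (intro hh; apply h; apply (iff X Xl AX); auto).
  }
assert (atom_eq2 : forall x y, atom x y -> atom y = atom x).
{ intros x y h. destruct (atom_eq x y h) as [q1 q2]. unfold atom. rewrite q1, q2. reflexivity. }
assert (atom_good : forall x, good A (Gx x) (Dx x)).
{ intro x. split; [|split].
  - intros X h. apply inG in h. tauto.
  - intros X h. apply inD in h. tauto.
  - intros X h h'. apply inG in h. apply inD in h'. tauto. }
destruct HA as [[Ab Ai] Amax].
assert (atom_big : forall x, big (atom x)).
{ intro x. destruct (atom_good x) as [g1 [g2 g3]]. apply Ai; auto. }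
assert (atom_sub : forall G D x, good A G D -> comb_set G D x -> forall y, atom x y -> comb_set G D y).
{ intros G D x [gG [gD _]] [c1 c2] y [a1 a2]. split.
  - intros X XG. apply a1. apply inG. split; [apply cov, gG, XG|split; [apply gG, XG|apply c1, XG]].
  - intros Y YD. apply a2. apply inD. split; [apply cov, gD, YD|split; [apply gD, YD|apply c2, YD]]. }
clearbody atom.
set (S := fun y => Hf (atom y) y).
assert (spl : forall G D, good A G D -> splits S (comb_set G D)).
{ intros G D g. destruct g as [gG [gD gdis]].
  pose proof (Ai G D gG gD gdis) as bC. destruct (big_ne l0 _ bC) as [x0 Cx0].
  destruct (HfS (atom x0) (atom_big x0)) as [h1 [h2 h3]]. split.
  - apply (big_mono _ _ h2). intros y Hy. pose proof (h1 y Hy) as ay. split.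
    + exact (atom_sub G D x0 (conj gG (conj gD gdis)) Cx0 y ay).
    + unfold S. rewrite (atom_eq2 x0 y ay). exact Hy.
  - apply (big_mono _ _ h3). intros y [ay nH]. split.
    + exact (atom_sub G D x0 (conj gG (conj gD gdis)) Cx0 y ay).
    + unfold S. rewrite (atom_eq2 x0 y ay). exact nH. }
assert (bS : big S).
{ assert (g : good A nil nil). { split; [|split]; intros X []. }
  destruct (spl nil nil g) as [s1 _]. apply (big_mono _ _ s1). tauto. }
exact (noSplitAll l0 A (conj (conj Ab Ai) Amax) S bS spl).
Qed.

Theorem claim2p7 (L : Type) (R : L -> L -> Prop)
  (HR : strict_well_order R) (Hcard : initial_ordinal R)
  (Hunc : uncountable L) (Hcf : countable_cofinality R) :
  forall A : (L -> Prop) -> Prop, maximal_independent A ->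
    exists B : (L -> Prop) -> Prop, unsplittable B /\ card_le B A.
Proof.
intros A HA.
destruct (fin_or_inf (fun _ : L => True)) as [[lst cov]|[dL [dLi _]]].
{ exfalso. apply Hunc.
  exists (fun x => chooseT 0 (fun n => nth_error lst n = Some x)).
  intros x y E.
  pose proof (chooseT_spec 0 (fun n => nth_error lst n = Some x) (In_nth_error _ _ (cov x I))) as hx.
  pose proof (chooseT_spec 0 (fun n => nth_error lst n = Some y) (In_nth_error _ _ (cov y I))) as hy.
  simpl in hx, hy. rewrite E in hx. rewrite hx in hy. injection hy; auto. }
set (l0 := dL 0).
destruct (sq_main L dL dLi) as [pL pLi].
destruct (fin_or_inf A) as [[lst cov]|[dA0 [dA0i dA0A]]].
{ exfalso. apply (finCase l0 A HA lst cov (fun x => pL x (dL 0)) (fun x => pL x (dL 1))).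
  - intros x y E. apply pLi in E. tauto.
  - intros x y E. apply pLi in E. tauto.
  - intros x y E. apply pLi in E. destruct E as [_ E]. apply dLi in E. discriminate. }
set (SA := {X : L -> Prop | A X}).
set (dA := fun n => exist (fun X => A X) (dA0 n) (dA0A n) : SA).
assert (dAi : forall m n, dA m = dA n -> m = n).
{ intros m n E. apply dA0i. exact (f_equal (@proj1_sig _ _) E). }
destruct (sq_main SA dA dAi) as [pA pAi].
set (sig := fun X => match excluded_middle_informative (A X) with left h => exist (fun X => A X) X h | right _ => dA 0 end : SA).
assert (sigE : forall X, A X -> proj1_sig (sig X) = X).
{ intros X AX. unfold sig. destruct (excluded_middle_informative (A X)); [reflexivity|contradiction]. }
assert (mapi : forall l1 l2, (forall X, In X l1 -> A X) -> (forall X, In X l2 -> A X) -> map sig l1 = map sig l2 -> l1 = l2).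
{ induction l1 as [|x r IH]; intros [|y r'] h1 h2 E; try discriminate; auto.
  simpl in E. injection E as E1 E2. f_equal.
  - rewrite <- (sigE x), <- (sigE y), E1; auto. apply h2; left; auto. apply h1; left; auto.
  - apply IH; auto. intros X h; apply h1; right; auto. intros X h; apply h2; right; auto. }
set (B := fun C : L -> Prop => exists GD : list (L -> Prop) * list (L -> Prop),
            good A (fst GD) (snd GD) /\ C = comb_set (fst GD) (snd GD)).
exists B. split.
- split.
  + intros C [[G D] [[g1 [g2 g3]] ->]]. destruct HA as [[_ Ai] _]. apply Ai; auto.
  + intros [S [bS Hs]]. apply (noSplitAll l0 A HA S bS). intros G D g. apply Hs.
    exists (G, D). split; auto.
- set (gd := fun c : {C | B C} => proj1_sig (constructive_indefinite_description _ (proj2_sig c))).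
  assert (gdS : forall c, good A (fst (gd c)) (snd (gd c)) /\ proj1_sig c = comb_set (fst (gd c)) (snd (gd c))).
  { intro c. exact (proj2_sig (constructive_indefinite_description _ (proj2_sig c))). }
  clearbody gd.
  exists (fun c => pA (enc SA dA pA (map sig (fst (gd c)))) (enc SA dA pA (map sig (snd (gd c))))).
  intros c1 c2 E. apply pAi in E. destruct E as [E1 E2].
  apply (enc_inj SA dA dAi pA pAi) in E1, E2.
  destruct (gdS c1) as [[a1 [b1 _]] C1]. destruct (gdS c2) as [[a2 [b2 _]] C2].
  apply mapi in E1; auto. apply mapi in E2; auto.
  apply sig_eq. rewrite C1, C2, E1, E2. reflexivity.
Qed.
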